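(* Let $\epsilon>0$. Then $\hat\Psi(u)\neq\emptyset$ for every $u\in\mathbb{R}^k$ if and only if $\epsilon\in(0,\tfrac{1}{2k}]$.
   Context: $[k]=\{1,\dots,k\}$, $\mathcal{Y}=\{-1,1\}^k$, $\mathcal{V}=\{-1,0,1\}^k$. $u\odot u'$ entrywise product, $|u|$ entrywise absolute value, $\mathbbm{1}$ all-ones; $\boxed{u}=\mathrm{sign}(u)\odot\min(|u|,\mathbbm{1})$. For $A\subseteq\mathbb{R}^k$, $d_\infty(A,u)=\inf_{a\in A}\|a-u\|_\infty$. For a permutation $\pi$ of $[k]$ and $i\in\{0,\dots,k\}$, $\mathbbm{1}_{\pi,i}$ is the indicator vector of $\{\pi_1,\dots,\pi_i\}$; $V_{\pi,y}=\{\mathbbm{1}_{\pi,i}\odot y: i=0,\dots,k\}$; $\mathcal{V}^{\text{face}}=\bigcup_{\pi,y\in\mathcal{Y}}2^{V_{\pi,y}}$; $\hat\Psi(u)=\bigcap\{V\in\mathcal{V}^{\text{face}}:d_\infty(\mathrm{conv}\,V,\boxed{u})<\epsilon\}$. *)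

(* Defs.v *)
From HB Require Import structures.
From mathcomp Require Import all_boot all_order all_algebra all_fingroup.
From mathcomp Require Import all_classical all_reals.
From mathcomp Require Import ereal.
Set Implicit Arguments. Unset Strict Implicit. Unset Printing Implicit Defensive.
Import Order.TTheory GRing.Theory Num.Theory.
Local Open Scope classical_set_scope.
Local Open Scope ring_scope.

Section Defs.
Variables (R : realType) (k : nat).

Definition linf (a u : 'rV[R]_k) : R :=
  \big[Num.max/0]_(i < k) `|a ord0 i - u ord0 i|.

(* d_inf(A,u) = inf_{a in A} ||a-u||_inf, as an extended real (inf of empty = +oo) *)
Definition d_inf (A : set 'rV[R]_k) (u : 'rV[R]_k) : \bar R :=
  ereal_inf [set (linf a u)%:E | a in A].

Definition conv (V : set 'rV[R]_k) : set 'rV[R]_k :=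
  [set p | exists (n : nat) (w : 'I_n -> R) (x : 'I_n -> 'rV[R]_k),
     (forall i, V (x i)) /\ (forall i, 0 <= w i) /\ (\sum_(i < n) w i = 1) /\
     p = \sum_(i < n) w i *: x i].

Definition clip (u : 'rV[R]_k) : 'rV[R]_k :=
  \row_j (Num.sg (u ord0 j) * Num.min `|u ord0 j| 1).

Definition ind_perm (pi : 'S_k) (i : nat) : 'rV[R]_k :=
  \row_j (if [exists m : 'I_k, (m < i)%N && (pi m == j)] then 1 else 0).

(* y in {-1,1}^k represented by a boolean vector *)
Definition signvec (y : 'I_k -> bool) : 'rV[R]_k :=
  \row_j (if y j then 1 else -1).

Definition Vpy (pi : 'S_k) (y : 'I_k -> bool) : set 'rV[R]_k :=
  [set v | exists2 i : nat, (i <= k)%N &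
     v = \row_j (ind_perm pi i ord0 j * signvec y ord0 j)].

Definition is_face (V : set 'rV[R]_k) : Prop :=
  exists (pi : 'S_k) (y : 'I_k -> bool), V `<=` Vpy pi y.

Definition Psi_hat (eps : R) (u : 'rV[R]_k) : set 'rV[R]_k :=
  \bigcap_(V in [set V | is_face V /\ (d_inf (conv V) (clip u) < eps%:E)%E]) V.

End Defs.

(* Main.v *)
Require Import Defs.
From HB Require Import structures.
From mathcomp Require Import all_boot all_order all_algebra all_fingroup.
From mathcomp Require Import all_classical all_reals ereal.
From mathcomp Require Import zify ring lra.
Import Order.TTheory GRing.Theory Num.Theory.
Local Open Scope classical_set_scope.
Local Open Scope ring_scope.

Lemma ind_permE (R : realType) k (pi : 'S_k) i j :
  ind_perm R pi i ord0 j = if ((pi^-1)%g j < i)%N then 1 else 0.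
Proof.
rewrite mxE; congr (if _ then _ else _).
apply/existsP/idP => [[m /andP[hm /eqP <-]]|h]; first by rewrite permK.
by exists ((pi^-1)%g j); rewrite h permKV eqxx.
Qed.

Lemma sum_gt (R : realType) n j :
  \sum_(i < n) (if (j < i)%N then (1:R) else 0) = (n - j.+1)%:R.
Proof.
elim: n => [|n IH]; first by rewrite big_ord0 sub0n.
rewrite big_ord_recr /= IH; case: ltnP => h.
  by rewrite natr1; congr _%:R; lia.
by rewrite addr0; congr _%:R; lia.
Qed.

Lemma sum_ge (R : realType) n j :
  \sum_(i < n) (if (j <= i)%N then (1:R) else 0) = (n - j)%:R.
Proof.
elim: n => [|n IH]; first by rewrite big_ord0 sub0n.
rewrite big_ord_recr /= IH; case: leqP => h.
  by rewrite natr1; congr _%:R; lia.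
by rewrite addr0; congr _%:R; lia.
Qed.

Lemma pigeon (R : realType) k (f : 'I_k -> R) (eps : R) : 0 < eps ->
  exists s : 'I_k.+1, forall j, ~ ((2 * s%:R * eps - eps < f j) /\ (f j < 2 * s%:R * eps + eps)).
Proof.
move=> he; apply: contrapT => H.
have H' : forall s : 'I_k.+1, exists j, (2 * s%:R * eps - eps < f j) /\ (f j < 2 * s%:R * eps + eps).
  move=> s; apply: contrapT => Hs; apply: H; exists s => j cj; apply: Hs; by exists j.
have [g hg] := choice H'.
have ig : injective g.
  move=> s1 s2 e.
  have [a1 b1] := hg s1; have [a2 b2] := hg s2; rewrite e in a1 b1.
  apply/val_inj/eqP; rewrite eqn_leq; apply/andP; split; rewrite leqNgt; apply/negP => lt.
  - have : (s2 : nat).+1%:R <= (s1 : nat)%:R :> R by rewrite ler_nat.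
    rewrite -natr1 => le; nra.
  - have : (s1 : nat).+1%:R <= (s2 : nat)%:R :> R by rewrite ler_nat.
    rewrite -natr1 => le; nra.
have := leq_card g ig; by rewrite !card_ord ltnn.
Qed.

Lemma back (R : realType) k (hk : (0<k)%N) (eps : R) (heps : 0 < eps)
  (he : eps <= (2 * k%:R)^-1) (p : 'rV[R]_k) :
  exists v, forall V, is_face V -> (d_inf (conv V) p < eps%:E)%E -> V v.
Proof.
have [s hs] := @pigeon R k (fun j => `|p ord0 j|) eps heps.
set c := 2 * (s:nat)%:R * eps in hs.
have c0 : 0 <= c by rewrite /c; apply: mulr_ge0; [apply: mulr_ge0 => //|]; apply: ltW.
have k0 : 0 < 2 * (k%:R : R) by rewrite mulr_gt0 // ltr0n.
have he' : eps * (2 * k%:R) <= 1 by rewrite -ler_pdivlMr // div1r.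
have sk : (s:nat)%:R <= k%:R :> R by rewrite ler_nat -ltnS.
have c1 : c <= 1 by rewrite /c; nra.
exists (\row_j (if c + eps <= `|p ord0 j| then Num.sg (p ord0 j) else 0)).
move=> V [pi [y Vsub]] /ereal_inf_lt [_ [a ha <-]]; rewrite lte_fin => hlin.
have hlj : forall j, `|a ord0 j - p ord0 j| < eps.
  move=> j; apply: le_lt_trans hlin; rewrite /linf.
  exact: (le_bigmax _ (fun i => `|a ord0 i - p ord0 i|) j).
case: ha => n [w [x [hxV [hw0 [hw1 ea]]]]].
have hm : forall l, exists m, (m <= k)%N /\
    x l = \row_j (ind_perm R pi m ord0 j * signvec R y ord0 j).
  by move=> l; have [m hm ->] := Vsub _ (hxV l); exists m.
have [m hmx] := choice hm.
pose G := fun t => \sum_(l < n) w l * (if (t <= m l)%N then 1 else 0).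
have Ecoord : forall j, a ord0 j = G ((pi^-1)%g j).+1 * (if y j then 1 else -1).
  move=> j; rewrite ea summxE /G big_distrl /=; apply: eq_bigr => l _.
  rewrite mxE (proj2 (hmx l)) mxE ind_permE mxE.
  by rewrite mulrA.
have G0 : G 0%N = 1 by rewrite -hw1; apply: eq_bigr => l _; rewrite mulr1.
have Gk : G k.+1 = 0.
  apply: big1 => l _; have [hl _] := hmx l; rewrite ltnNge hl /= mulr0 //.
have Gmono : forall t1 t2, (t1 <= t2)%N -> G t2 <= G t1.
  move=> t1 t2 h; apply: ler_sum => l _; apply: ler_wpM2l => //.
  case: ifP => h2; last by case: ifP.
  by rewrite (leq_trans h h2).
have Gge0 : forall t, 0 <= G t.
  move=> t; apply: sumr_ge0 => l _; apply: mulr_ge0 => //; by case: ifP.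
have hT : forall j, c + eps <= `|p ord0 j| ->
    (if y j then 1 else -1) = Num.sg (p ord0 j) /\ c < G ((pi^-1)%g j).+1.
  move=> j hj; have := hlj j; rewrite Ecoord ltr_norml => /andP[h1 h2].
  have g0 := Gge0 ((pi^-1)%g j).+1.
  case: (leP 0 (p ord0 j)) => pp.
  - rewrite ger0_norm // in hj; rewrite gtr0_sg; last by lra.
    by case: (y j) h1 h2; rewrite ?mulr1 ?mulrN1 => h1 h2; [split => //; lra | exfalso; lra].
  - rewrite ltr0_norm // in hj; rewrite ltr0_sg //.
    by case: (y j) h1 h2; rewrite ?mulr1 ?mulrN1 => h1 h2; [exfalso; lra | split => //; lra].
have hN : forall j, ~ (c + eps <= `|p ord0 j|) -> G ((pi^-1)%g j).+1 < c.
  move=> j hj; have hsj := hs j; move/negP: hj; rewrite -ltNge => hj.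
  have hpj : `|p ord0 j| <= c - eps.
    rewrite leNgt; apply/negP => H; apply: hsj; split => //.
  have := hlj j; rewrite Ecoord ltr_norml => /andP[h1 h2].
  have g0 := Gge0 ((pi^-1)%g j).+1.
  case: (leP 0 (p ord0 j)) => pp.
  - rewrite ger0_norm // in hpj.
    by case: (y j) h1 h2; rewrite ?mulr1 ?mulrN1 => h1 h2; lra.
  - rewrite ltr0_norm // in hpj.
    by case: (y j) h1 h2; rewrite ?mulr1 ?mulrN1 => h1 h2; lra.
have exP : exists t, G t.+1 <= c by exists k; rewrite Gk.
case: (ex_minnP exP) => i hi imin.
have ik : (i <= k)%N by apply: imin; rewrite Gk.
have Tchar : forall j, (c + eps <= `|p ord0 j|) = ((pi^-1)%g j < i)%N.
  move=> j; case: ltnP => hr.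
  - apply/idP/negP => hj; have := hN j hj.
    have : ~~ (G ((pi^-1)%g j).+1 <= c).
      by apply/negP => H; have := imin _ H; rewrite leqNgt hr.
    rewrite -ltNge => H1 H2; lra.
  - apply/negP => hj; have [_ h] := hT j hj.
    have := Gmono i.+1 ((pi^-1)%g j).+1; rewrite ltnS => /(_ hr) H; lra.
have Gstrict : G i.+1 < G i.
  case: (ltnP i k) => ik'.
  - pose j0 := pi (Ordinal ik').
    have rj0 : (pi^-1)%g j0 = Ordinal ik' by rewrite /j0 permK.
    have h1 : G i.+1 < c.
      have := hN j0; rewrite rj0 /=; apply; by rewrite Tchar rj0 /= ltnn.
    have h2 : c <= G i.
      move: imin; case E: i => [|i'] imin'; first by rewrite G0.
      rewrite leNgt; apply/negP => H; have := imin' i' (ltW H); by rewrite ltnn.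
    lra.
  - have ek : i = k by apply/eqP; rewrite eqn_leq ik ik'.
    rewrite ek Gk.
    have : ~~ (G k <= c).
      apply/negP => H; have := imin k.-1; rewrite prednK // => /(_ H); lia.
    rewrite -ltNge => H; lra.
have [l hl] : exists l, m l = i.
  apply: contrapT => H.
  have : G i = G i.+1.
    apply: eq_bigr => l _; congr (_ * _).
    rewrite (leq_eqVlt i) (_ : (i == m l) = false) //.
    by apply/eqP => e'; apply: H; exists l.
  by move=> e; rewrite e ltxx in Gstrict.
have -> : (\row_j (if c + eps <= `|p ord0 j| then Num.sg (p ord0 j) else 0)) = x l.
  apply/rowP => j; rewrite (proj2 (hmx l)) mxE mxE ind_permE mxE hl -Tchar.
  case: ifP => hj; last by rewrite mul0r.
  by rewrite mul1r; have [-> _] := hT j hj.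
exact: hxV.
Qed.

Lemma fwd (R : realType) k (hk : (0<k)%N) (eps : R) (heps : 0 < eps)
  (hlt : (2 * k%:R)^-1 < eps) : exists u : 'rV[R]_k, Psi_hat eps u = set0.
Proof.
pose p : 'rV[R]_k := \row_(j < k) (1 - (2 * (j:nat)%:R + 1) / (2 * k%:R)).
pose vt := fun t : nat => \row_(j < k) (ind_perm R (1%g : 'S_k) t ord0 j *
   signvec R (fun _ => true) ord0 j).
have vtE : forall t j, vt t ord0 j = if (j < t)%N then 1 else 0.
  by move=> t j; rewrite mxE ind_permE mxE invg1 perm1 mulr1.
have vt_inj : forall a b, (a <= k)%N -> (b <= k)%N -> vt a = vt b -> a = b.
  move=> a b ha hb e; apply/eqP; rewrite eqn_leq; apply/andP; split;
    rewrite leqNgt; apply/negP => lt.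
  - have bk : (b < k)%N by apply: leq_trans lt ha.
    have := congr1 (fun v : 'rV[R]_k => v ord0 (Ordinal bk)) e.
    rewrite !vtE /= lt ltnn => /eqP; by rewrite oner_eq0.
  - have ak : (a < k)%N by apply: leq_trans lt hb.
    have := congr1 (fun v : 'rV[R]_k => v ord0 (Ordinal ak)) e.
    rewrite !vtE /= lt ltnn => /eqP; by rewrite eq_sym oner_eq0.
have K0 : 0 < (k%:R : R) by rewrite ltr0n.
have clipP : clip p = p.
  apply/rowP => j; rewrite !mxE.
  have jk : (j%:R : R) + 1 <= k%:R by rewrite natr1 ler_nat.
  have h1 : (2 * (j:nat)%:R + 1) / (2 * k%:R) < 1 :> R.
    by rewrite ltr_pdivrMr ?mulr_gt0 //; lra.
  have h2 : 0 < (2 * (j:nat)%:R + 1) / (2 * k%:R) :> R.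
    by rewrite divr_gt0 ?mulr_gt0 //; lra.
  rewrite gtr0_sg ?mul1r ?ger0_norm ?min_l //; lra.
exists p; rewrite /Psi_hat clipP.
pose F := fun t => [set x | Vpy (1%g : 'S_k) (fun _ => true) x /\ x <> vt t].
have Fok : forall t, (t <= k)%N -> is_face (F t) /\ (d_inf (conv (F t)) p < eps%:E)%E.
  move=> t ht; split; first by exists 1%g, (fun _ => true) => x [].
  pose f := fun i : 'I_k => if (i < t)%N then (i:nat) else (i:nat).+1.
  pose q := \sum_(i < k) (k%:R^-1 : R) *: vt (f i).
  apply: (le_lt_trans (y := ((2 * k%:R)^-1)%:E)); last by rewrite lte_fin.
  apply: ge_ereal_inf; exists (linf q p)%:E; last first.
    rewrite lee_fin /linf; apply: bigmax_le => [|j _].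
      by rewrite invr_ge0 mulr_ge0 // ltW.
    have qE : q ord0 j = k%:R^-1 * \sum_(i < k) (if (j < f i)%N then 1 else 0).
      rewrite summxE big_distrr /=; apply: eq_bigr => i _; by rewrite mxE vtE.
    have L : \sum_(i < k) (if (j < i)%N then (1:R) else 0) <=
             \sum_(i < k) (if (j < f i)%N then 1 else 0).
      apply: ler_sum => i _; have : (j < i)%N -> (j < f i)%N by rewrite /f; case: ifP => _; lia.
      by case: (j < i)%N => [->|_] //; case: ifP.
    have U : \sum_(i < k) (if (j < f i)%N then (1:R) else 0) <=
             \sum_(i < k) (if (j <= i)%N then 1 else 0).
      apply: ler_sum => i _; have : (j < f i)%N -> (j <= i)%N by rewrite /f; case: ifP => _; lia.
      by case: (j < f i)%N => [->|_] //; case: ifP.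
    rewrite sum_gt natrB ?ltn_ord // -natr1 in L.
    rewrite sum_ge natrB in U; last exact: ltnW (ltn_ord j).
    rewrite qE mxE.
    move: L U; set N := \sum_(i<k) _ => L U.
    have e0 : 0 < (k%:R : R)^-1 by rewrite invr_gt0.
    have eK : (k%:R : R)^-1 * k%:R = 1 by rewrite mulVf // gt_eqF.
    have := ler_wpM2l (ltW e0) L; have := ler_wpM2l (ltW e0) U.
    rewrite !invfM ler_norml; move: e0 eK; set e := (k%:R : R)^-1 => e0 eK h1 h2.
    apply/andP; split; lra.
  exists q => //.
  exists k, (fun _ => k%:R^-1), (fun i => vt (f i)); split; [|split; [|split]] => //.
  - move=> i; have fik : (f i <= k)%N by rewrite /f; case: ifP => _; [apply: ltnW|].
    split; first by exists (f i).
    move/vt_inj => /(_ fik ht) e; move: e; rewrite /f; case: ifP => h e; lia.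
  - by rewrite sumr_const card_ord -[_ *+ k]mulr_natl divff // gt_eqF.
apply/seteqP; split => v //= Hv.
have [[i hi ev] _] := Hv (F 0%N) (Fok 0%N (leq0n _)).
have [_ ne] := Hv (F i) (Fok i hi).
by apply: ne.
Qed.

Theorem lemma8 (R : realType) (k : nat) (hk : (0 < k)%N) (eps : R) (heps : 0 < eps) :
  (forall u : 'rV[R]_k, @Psi_hat R k eps u <> set0) <-> eps <= (2 * k%:R)^-1.
Proof.
split.
- move=> H; rewrite leNgt; apply/negP => hlt.
  have [u hu] := @fwd R k hk eps heps hlt.
  exact: H u hu.
- move=> he u hu.
  have [v hv] := @back R k hk eps heps he (clip u).
  have : Psi_hat eps u v by move=> V [hV hd]; exact: hv V hV hd.
  by rewrite hu.
Qed.
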